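(* Let $\langle\mathcal X,\mathcal C,d,\ell,(x_1,\dots,x_n)\rangle$ be a multiple facility location instance and $1\le k\le n$. Define the feature $f:[n]\to\mathcal X$ by $f(i)=x_i$. Then $$\mathbb E_{S\sim\mathcal U_{k,n}}\big[\textsc{Social-Cost}(\overline y(S))\big]\le\textsc{Social-Opt}+\mathbb E_{S\sim\mathcal U_{k,n}}\big[W(\phi_f^{[n]},\phi_f^S)\big].$$
   Context: A multiple facility location instance consists of a metric space $(\mathcal X,d)$ with $d:\mathcal X\times\mathcal X\to[0,1]$, candidate locations $\mathcal C\subseteq\mathcal X$, a number $\ell\ge1$ of facilities and agent locations $x_1,\dots,x_n$. For $y\in\mathcal C^\ell$, $\mathrm{Cost}_i(y)=\min_{j\in[\ell]}d(x_i,y_j)$, $\textsc{Social-Cost}(y)=\frac1n\sum_i\mathrm{Cost}_i(y)$, $\textsc{Social-Opt}=\min_{y\in\mathcal C^\ell}\textsc{Social-Cost}(y)$, $\textsc{Panel-Cost}(y,S)=\frac1k\sum_{i\in S}\mathrm{Cost}_i(y)$, $\overline y(S)\in\arg\min_{y\in\mathcal C^\ell}\textsc{Panel-Cost}(y,S)$ (minimizers assumed to exist). For nonempty $S\subseteq[n]$, $\phi_f^S=\frac1{|S|}\sum_{i\in S}\delta(f(i))$ with $\delta$ a Dirac mass; $W(\phi,\psi)=\min_\gamma\mathbb E_{(x,y)\sim\gamma}[d(x,y)]$ over couplings $\gamma$ of $\phi,\psi$. $\mathcal U_{k,n}$ is the uniform distribution over size-$k$ subsets of $[n]$. *)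

(* Defs.v *)
From HB Require Import structures.
From mathcomp Require Import all_boot all_order all_algebra.
From mathcomp Require Import classical_sets reals.
Set Implicit Arguments. Unset Strict Implicit. Unset Printing Implicit Defensive.
Import Order.TTheory GRing.Theory Num.Theory.
Local Open Scope ring_scope.

Section FL.
Variables (R : realType) (X : eqType).

Definition is_metric01 (d : X -> X -> R) : Prop :=
  (forall a b, 0 <= d a b <= 1) /\
  (forall a b, d a b = 0 <-> a = b) /\
  (forall a b, d a b = d b a) /\
  (forall a b c, d a c <= d a b + d b c).

Definition in_cands (C : set X) (l : nat) (y : 'I_l -> X) : Prop :=
  forall j, C (y j).

(* Cost_i(y) = min_j d(x_i, y_j).  Seeded with 1: since d <= 1 and l >= 1
   this is exactly the minimum over j. *)
Definition cost (d : X -> X -> R) (l : nat) (xi : X) (y : 'I_l -> X) : R :=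
  \big[Num.min/1]_(j < l) d xi (y j).

Definition social_cost (d : X -> X -> R) (n l : nat) (x : 'I_n -> X)
  (y : 'I_l -> X) : R :=
  n%:R^-1 * \sum_(i < n) cost d (x i) y.

Definition panel_cost (d : X -> X -> R) (n l k : nat) (x : 'I_n -> X)
  (y : 'I_l -> X) (S : {set 'I_n}) : R :=
  k%:R^-1 * \sum_(i in S) cost d (x i) y.

(* Empirical distribution phi_f^S = (1/|S|) sum_{i in S} delta(x_i),
   represented by its (finitely supported) mass function on X. *)
Definition emp (n : nat) (x : 'I_n -> X) (S : {set 'I_n}) : X -> R :=
  fun z => #|[set i in S | x i == z]|%:R / #|S|%:R.

Definition pts (n : nat) (x : 'I_n -> X) : seq X := undup [seq x i | i <- enum 'I_n].

Definition is_coupling (P : seq X) (mu nu : X -> R) (g : X -> X -> R) : Prop :=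
  (forall a b, 0 <= g a b) /\
  (forall a b, g a b != 0 -> (a \in P) && (b \in P)) /\
  (forall a, \sum_(b <- P) g a b = mu a) /\
  (forall b, \sum_(a <- P) g a b = nu b).

Definition wass (d : X -> X -> R) (P : seq X) (mu nu : X -> R) : R :=
  inf [set c | exists g, is_coupling P mu nu g /\
                 c = \sum_(a <- P) \sum_(b <- P) g a b * d a b].

End FL.
Arguments emp {R X n} x S z.

Definition Eunif (R : realType) (n k : nat) (F : {set 'I_n} -> R) : R :=
  (#|[set S : {set 'I_n} | #|S| == k]|%:R)^-1 *
  \sum_(S : {set 'I_n} | #|S| == k) F S.

(* Main.v *)
Require Import Defs.
From HB Require Import structures.
From mathcomp Require Import all_boot all_order all_algebra.
From mathcomp Require Import classical_sets reals.
From mathcomp Require Import fingroup perm.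
From mathcomp Require Import ring.
Import Order.TTheory GRing.Theory Num.Theory.
Local Open Scope ring_scope.

Set Implicit Arguments.
Section H.
Variables (R : realType) (X : eqType) (d : X -> X -> R).
Hypothesis md : is_metric01 d.

Lemma cost_lip l (y : 'I_l -> X) a b : cost d a y <= cost d b y + d a b.
Proof.
case: md => d01 [_ [dsym dtri]].
rewrite -lerBlDr /cost; apply: le_bigmin.
  rewrite lerBlDr; apply: le_trans (bigmin_le_id _ _ _ _) _.
  by rewrite lerDl; case/andP: (d01 a b).
move=> j _; rewrite lerBlDr; apply: le_trans (bigmin_le _ j _) _.
by rewrite addrC dtri.
Qed.

Lemma pts_mem n (x : 'I_n -> X) i : x i \in pts x.
Proof. by rewrite /pts mem_undup; apply: map_f; rewrite mem_enum. Qed.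

Lemma sum_pick n (x : 'I_n -> X) i (h : X -> R) :
  \sum_(a <- pts x) (x i == a)%:R * h a = h (x i).
Proof.
rewrite (big_rem (x i)) ?pts_mem // eqxx mul1r big1_seq /= ?addr0 //.
move=> a.
move=> Ha; case: eqP => [E|]; last by rewrite mul0r.
by move: Ha; rewrite -E mem_rem_uniqF ?undup_uniq.
Qed.

Lemma emp_sum n (x : 'I_n -> X) (S : {set 'I_n}) (h : X -> R) :
  \sum_(a <- pts x) emp x S a * h a = #|S|%:R^-1 * \sum_(i in S) h (x i).
Proof.
under eq_bigr => a _ do rewrite /emp mulrAC.
rewrite -mulr_suml mulrC; congr (_ * _).
under [RHS]eq_bigr => i _ do rewrite -(sum_pick x i h).
rewrite exchange_big /=; apply: eq_bigr => a _.
rewrite -mulr_suml; congr (_ * _).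
rewrite (big_mkcond (fun i => i \in S)) /=.
rewrite -(sumr_const (mem [set i in S | x i == a])) big_mkcond /=.
apply: eq_bigr => i _; rewrite inE.
by case: (i \in S); case: (x i == a); rewrite ?mul1r ?mul0r.
Qed.

Lemma emp_supp n (x : 'I_n -> X) S a : emp (R:=R) x S a != 0 -> a \in pts x.
Proof.
apply: contraR => Ha; rewrite /emp.
suff -> : [set i in S | x i == a] = finset.set0 by rewrite cards0 mul0r.
apply/setP => i; rewrite !inE; case: eqP => // E.
  by move: Ha; rewrite -E pts_mem.
by rewrite andbF.
Qed.

Lemma emp_tot n (x : 'I_n -> X) S : S != finset.set0 -> \sum_(a <- pts x) emp (R:=R) x S a = 1.
Proof.
move=> SN.
have := emp_sum x S (fun _ => 1); under eq_bigr do rewrite mulr1.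
move=> ->; rewrite sumr_const mulrC -(mulr_natl 1) mulr1 divff //.
by rewrite pnatr_eq0 -lt0n card_gt0.
Qed.


Lemma social_emp n (x : 'I_n -> X) l (y : 'I_l -> X) :
  social_cost d x y = \sum_(a <- pts x) emp (R:=R) x [set: 'I_n] a * cost d a y.
Proof.
rewrite (emp_sum x [set: 'I_n] (fun a => cost d a y)) cardsT card_ord /social_cost.
by congr (_ * _); apply: eq_bigl => i; rewrite inE.
Qed.

Lemma coupling_bound n (x : 'I_n -> X) (S : {set 'I_n}) l (y : 'I_l -> X) g :
  is_coupling (pts x) (emp x [set: 'I_n]) (emp x S) g ->
  social_cost d x y <= #|S|%:R^-1 * \sum_(i in S) cost d (x i) y
    + \sum_(a <- pts x) \sum_(b <- pts x) g a b * d a b.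
Proof.
case=> g0 [_ [m1 m2]].
rewrite social_emp -(emp_sum x S (fun a => cost d a y)).
under eq_bigr => a _ do rewrite -m1 mulr_suml.
under [X in _ <= X + _]eq_bigr => b _ do rewrite -m2 mulr_suml.
rewrite [X in _ <= X + _]exchange_big -big_split /=.
apply: ler_sum => a _; rewrite -big_split /=; apply: ler_sum => b _.
by rewrite -mulrDr; apply: ler_wpM2l; [exact: g0 | exact: cost_lip].
Qed.

Lemma prod_coupling n (x : 'I_n -> X) (S : {set 'I_n}) : S != finset.set0 ->
  is_coupling (pts x) (emp x [set: 'I_n]) (emp x S)
    (fun a b => emp (R:=R) x [set: 'I_n] a * emp (R:=R) x S b).
Proof.
move=> SN.
have TN : [set: 'I_n] != finset.set0.
  case/set0Pn: SN => i _; apply/set0Pn; exists i; by rewrite inE.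
have e0 T a : 0 <= emp (R:=R) x T a by rewrite /emp divr_ge0.
split; first by move=> a b; rewrite mulr_ge0.
split; first by move=> a b; rewrite mulf_eq0 negb_or => /andP[/emp_supp -> /emp_supp ->].
split; first by move=> a; rewrite -mulr_sumr emp_tot // mulr1.
by move=> b; rewrite -mulr_suml emp_tot // mul1r.
Qed.

Lemma per_S n (x : 'I_n -> X) (S : {set 'I_n}) l (y yo : 'I_l -> X) k C :
  #|S| = k -> (0 < k)%N -> in_cands C yo ->
  (forall y' : 'I_l -> X, in_cands C y' -> panel_cost d k x y S <= panel_cost d k x y' S) ->
  social_cost d x y <= panel_cost d k x yo S + wass d (pts x) (emp x [set: 'I_n]) (emp x S).
Proof.
move=> hS k0 Cyo hmin.
have SN : S != finset.set0 by rewrite -card_gt0 hS.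
rewrite -lerBlDl; apply: lb_le_inf.
  eexists; exists (fun a b => emp (R:=R) x [set: 'I_n] a * emp (R:=R) x S b).
  by split; [exact: prod_coupling|].
move=> c [g [hg ->]]; rewrite lerBlDl.
apply: le_trans (coupling_bound y hg) _; rewrite hS lerD2r.
exact: hmin.
Qed.

Local Close Scope ring_scope.
Definition Mi n k (i : 'I_n) := (\sum_(S : {set 'I_n} | #|S| == k) (i \in S : nat))%N.

Lemma Mi_sym n k (i j : 'I_n) : Mi k i = Mi k j.
Proof.
pose f := fun S : {set 'I_n} => [set tperm i j z | z in S].
have fK : cancel f f.
  move=> S; rewrite /f -imset_comp -[RHS]imset_id; apply: eq_imset => z /=.
  by rewrite tpermK.
rewrite /Mi (reindex_inj (can_inj fK)) /=; apply: eq_big => S.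
  by rewrite /f card_imset //; exact: perm_inj.
move=> _; rewrite /f -[X in X \in _](tpermR i j) mem_imset //; exact: perm_inj.
Qed.

Lemma Mi_sum n k : (\sum_(i < n) Mi k i = k * #|[set S : {set 'I_n} | #|S| == k]|)%N.
Proof.
rewrite /Mi exchange_big /=.
transitivity (\sum_(S : {set 'I_n} | #|S| == k) k)%N.
  apply: eq_bigr => S /eqP <-; rewrite -sum1_card [RHS]big_mkcond /=.
  by apply: eq_bigr => i _; case: (i \in S).
rewrite sum_nat_const mulnC; congr (_ * _)%N.
by apply: eq_card => S; rewrite inE.
Qed.

End H.

Theorem lemma4p13 (R : realType) (X : eqType) (d : X -> X -> R) (C : set X)
  (l n k : nat) (x : 'I_n -> X)
  (ybar : {set 'I_n} -> 'I_l -> X) (yopt : 'I_l -> X) :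
  is_metric01 d ->
  (0 < l)%N ->
  (1 <= k <= n)%N ->
  (* yopt attains Social-Opt *)
  in_cands C yopt ->
  (forall y : 'I_l -> X, in_cands C y -> social_cost d x yopt <= social_cost d x y) ->
  (* ybar S is a minimizer of the panel cost over C^l *)
  (forall S : {set 'I_n}, #|S| = k ->
     in_cands C (ybar S) /\
     forall y : 'I_l -> X, in_cands C y -> panel_cost d k x (ybar S) S <= panel_cost d k x y S) ->
  Eunif k (fun S => social_cost d x (ybar S))
  <= social_cost d x yopt
     + Eunif k (fun S => wass d (pts x) (emp x [set: 'I_n]) (emp x S)).
Proof.
move=> md l0 /andP[k1 kn] Cyo hopt hbar.
set N := #|[set S : {set 'I_n} | #|S| == k]|.
have n0 : (0 < n)%N by apply: leq_trans kn.
have N0 : (0 < N)%N by rewrite /N card_draws card_ord bin_gt0.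
have key : N%:R^-1 * \sum_(S : {set 'I_n} | #|S| == k) panel_cost d k x yopt S
           = social_cost d x yopt.
  pose c := fun i => cost d (x i) yopt.
  have E : \sum_(S : {set 'I_n} | #|S| == k) panel_cost d k x yopt S
           = k%:R^-1 * \sum_i (Mi k i)%:R * c i.
    rewrite /panel_cost -mulr_sumr; congr (_ * _).
    rewrite /Mi; under [RHS]eq_bigr => i _ do rewrite natr_sum mulr_suml.
    rewrite [RHS]exchange_big /=; apply: eq_bigr => S _.
    rewrite [LHS]big_mkcond /=; apply: eq_bigr => i _.
    by case: (i \in S); rewrite ?mul1r ?mul0r.
  pose i0 : 'I_n := Ordinal n0.
  have hM : (n * Mi k i0 = k * N)%N.
    rewrite -Mi_sum; under [RHS]eq_bigr => i _ do rewrite (Mi_sym k i i0).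
    by rewrite sum_nat_const card_ord.
  rewrite E; under eq_bigr => i _ do rewrite (Mi_sym k i i0).
  rewrite -mulr_sumr /social_cost !mulrA; congr (_ * _).
  have hR : (n%:R * (Mi k i0)%:R = k%:R * N%:R :> R) by rewrite -!natrM hM.
  have nz : n%:R != 0 :> R by rewrite pnatr_eq0 -lt0n.
  have kz : k%:R != 0 :> R by rewrite pnatr_eq0 -lt0n.
  have Nz : N%:R != 0 :> R by rewrite pnatr_eq0 -lt0n.
  apply: (mulfI nz); rewrite divff //.
  have -> : n%:R * (N%:R^-1 / k%:R * (Mi k i0)%:R) =
     (n%:R * (Mi k i0)%:R) / (k%:R * N%:R) :> R.
    by field; rewrite kz Nz.
  by rewrite hR divff // mulf_neq0.
rewrite /Eunif -/N -[X in _ <= X + _]key -mulrDr -big_split /=.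
apply: ler_wpM2l; first by rewrite invr_ge0 ler0n.
apply: ler_sum => S /eqP hS; case: (hbar S hS) => _ hm.
exact: (per_S md x (ybar S) hS k1 Cyo hm).
Qed.
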